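(* Consider a single advertiser in a single-slot hybrid auction, with per-click value $v>0$. The advertiser's belief about its click-through rate is a random variable $\mathcal{P}$ on $[0,1]$ equal to the auctioneer's prior, with mean $p=\mathbb{E}[\mathcal{P}]>0$, and the auctioneer's index equals $q=p$. The advertiser submits a bid $(m,c)$ (per-impression and per-click), and has effective bid $\max(m,cq)$; if $R$ denotes the highest competing effective bid, the advertiser obtains the impression iff its effective bid exceeds $R$, paying $R$ per impression if $m>cq$ and $R/q$ per click otherwise. The advertiser has a utility function $U:\mathbb{R}\to\mathbb{R}$ that is monotone increasing with monotone derivative and $U(0)=0$, and, writing $I_R$ for the indicator that it obtains the impression, it evaluates a bid by $I_R\cdot \mathbb{E}[U(v\mathcal{P}-R)]$ if it is charged per impression and $I_R\cdot\mathbb{E}[U(v\mathcal{P}-R\mathcal{P}/p)]$ if it is charged per click (so that it seeks to maximize $I_R\cdot\max(\mathbb{E}[U(v\mathcal{P}-R)],\mathbb{E}[U(v\mathcal{P}-R\mathcal{P}/p)])$). Then: if $U$ is concave, bidding $(0,v)$ is a dominant strategy; if $U$ is convex, there is a dominant strategy of the form $(m,0)$ for a suitably chosen $m$.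
   Context: A strategy is dominant if for every value of the highest competing effective bid $R$ it achieves the maximum possible value of the advertiser's objective. *)

(* Defs.v *)
From HB Require Import structures.
From mathcomp Require Import all_boot all_order all_algebra.
From mathcomp Require Import all_classical all_reals all_analysis.
Set Implicit Arguments. Unset Strict Implicit. Unset Printing Implicit Defensive.
Import Order.TTheory GRing.Theory Num.Theory.
Local Open Scope ring_scope.

Definition concave_fun (R : realType) (U : R -> R) : Prop :=
  forall (x y t : R), 0 <= t <= 1 ->
    t * U x + (1 - t) * U y <= U (t * x + (1 - t) * y).

Definition convex_fun (R : realType) (U : R -> R) : Prop :=
  forall (x y t : R), 0 <= t <= 1 ->
    U (t * x + (1 - t) * y) <= t * U x + (1 - t) * U y.

Definition objective (d : measure_display) (T : measurableType d) (R : realType)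
  (P : probability T R) (X : T -> R) (v : R) (U : R -> R)
  (m c Rc : R) : \bar R :=
  let p : R := fine (expectation P X) in
  let q : R := p in
  if (Rc < Num.max m (c * q))%R then
    (if (c * q < m)%R then expectation P (fun w => U (v * X w - Rc)%R)
     else expectation P (fun w => U (v * X w - Rc * X w / p)%R))
  else 0%E.

Definition dominant (d : measure_display) (T : measurableType d) (R : realType)
  (P : probability T R) (X : T -> R) (v : R) (U : R -> R) (m c : R) : Prop :=
  forall Rc : R, 0 <= Rc ->
    forall m' c' : R, 0 <= m' -> 0 <= c' ->
      (objective P X v U m' c' Rc <= objective P X v U m c Rc)%E.

(* Main.v *)
Require Import Defs.
From HB Require Import structures.
From mathcomp Require Import all_boot all_order all_algebra.
From mathcomp Require Import all_classical all_reals all_analysis.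
From mathcomp Require Import ring lra.
Import Order.TTheory GRing.Theory Num.Theory numFieldNormedType.Exports.
Local Open Scope classical_set_scope.
Local Open Scope ring_scope.

Lemma tangent (R : realType) (U : R -> R) x y : concave_fun U -> derivable U x 1 ->
  U y <= U x + derive1 U x * (y - x).
Proof.
move=> cU dx.
have dU : differentiable U x by apply/derivable1_diffP.
set d := y - x.
have hD : 'D_d U x = d * derive1 U x.
  rewrite deriveE // derive1E' //.
  by rewrite -{1}[d]mulr1 -[d * 1]/(d *: (1:R)) linearZ.
have cv : (fun h => h^-1 *: (U (h *: d + x) - U x)) @ 0^' --> 'D_d U x.
  exact: diff_derivable.
have cv' : (fun h => h^-1 *: (U (h *: d + x) - U x)) @ 0^'+ --> 'D_d U x.
  move=> A /cv /nbhs_ballP [_ /posnumP[e] xe_A].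
  exists e%:num => //= z xe_z; rewrite lt_def => /andP [zne _]; exact: xe_A.
have : U y - U x <= 'D_d U x.
  apply: (cvgr_to_ge cv'); near=> h.
  have h0 : 0 < h by near: h; exact: nbhs_right_gt.
  have h1 : h <= 1 by near: h; exact: nbhs_right_le.
  have H : h * U y + (1 - h) * U x <= U (h * y + (1 - h) * x).
    by apply: cU; rewrite ltW ?h1.
  have -> : h *: d + x = h * y + (1 - h) * x.
    by rewrite /GRing.scale/= /d; ring.
  rewrite /= /GRing.scale /= -(ler_pM2l h0) mulrA mulfV ?gt_eqF // mul1r.
  lra.
by rewrite hD mulrC lerBlDl.
Unshelve. all: end_near. Qed.

Lemma tangent_cvx (R : realType) (U : R -> R) x y : convex_fun U -> derivable U x 1 ->
  U x + derive1 U x * (y - x) <= U y.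
Proof.
move=> cU dx.
have cN : concave_fun (- U).
  move=> a b t /cU H /=; rewrite !mulrN -opprD lerN2; exact: H.
have := @tangent R (- U) x y cN (derivableN dx).
rewrite derive1N //= => H.
have H2 : - U y <= - U x + - derive1 U x * (y - x) := H.
lra.
Qed.
Section S.
Context (d : measure_display) (T : measurableType d) (R : realType)
  (P : probability T R) (X : {RV P >-> R}) (hX : forall w, 0 <= X w <= 1).

Lemma lfun_bdd (f : T -> R) M : measurable_fun setT f ->
  (forall w, `|f w| <= M) -> f \in Lfun P 1.
Proof.
move=> mf fM; apply/Lfun1_integrable; apply: measurable_bounded_integrable => //.
  by apply: (le_lt_trans (probability_le1 _ measurableT)); exact: ltry.
rewrite /bounded_near. near=> N; move=> w _ /=; apply: le_trans (fM w) _.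
near: N; exact: nbhs_pinfty_ge (num_real M).
Unshelve. all: end_near. Qed.

Lemma mX : measurable_fun setT X.
Proof. exact: measurable_funPT. Qed.

Lemma lX : (X : T -> R) \in Lfun P 1.
Proof.
apply: (@lfun_bdd _ (1)); first exact: mX.
by move=> w; have /andP[h0 h1] := hX w; rewrite ger0_norm.
Qed.

Lemma Ele (p : R) (F G : T -> R) (K : R) : ('E_P[X] = p%:E)%E ->
  F \in Lfun P 1 -> G \in Lfun P 1 ->
  (forall w, F w <= G w + K * (X w - p)) -> ('E_P[F] <= 'E_P[G])%E.
Proof.
move=> EX lF lG H.
have lc : (cst p : T -> R) \in Lfun P 1.
  apply: (@lfun_bdd _ (`|p|)) => //; exact: measurable_cst.
have lB : (X \- cst p) \in Lfun P 1 by apply: rpredB => //; exact: lX.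
have lK : (K \o* (X \- cst p))%R \in Lfun P 1 by apply: Lfun_scale.
have E0 : (expectation P (K \o* (X \- cst p))%R = 0)%E.
  by rewrite expectationZl // expectationB //; [rewrite EX expectation_cst subee // mule0 | exact: lX].
have -> : (expectation P G = expectation P (G \+ K \o* (X \- cst p))%R)%E.
  by rewrite expectationD // E0 adde0.
rewrite unlock; apply: le_integral => //.
- exact/Lfun1_integrable.
- exact/Lfun1_integrable/rpredD.
- move=> w _; rewrite lee_fin /=; apply: le_trans (H w) _; by rewrite mulrC.
Qed.

Section S2.
Context (U : R -> R) (hU : {homo U : x y / x <= y}) (dU : forall x, derivable U x 1)
  (U0 : U 0 = 0).

Lemma cU : continuous U.
Proof. move=> x; apply: differentiable_continuous; exact/derivable1_diffP. Qed.

Lemma absb (y lo hi : R) : lo <= y -> y <= hi -> `|y| <= `|lo| + `|hi|.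
Proof.
move=> h1 h2; rewrite ler_norml.
have n1 := ler_norm hi.
have n2 : - `|lo| <= lo by rewrite lerNl; have := ler_norm (- lo); rewrite normrN.
have n3 := normr_ge0 hi. have n4 := normr_ge0 lo.
apply/andP; split; lra.
Qed.

Lemma lU (g : T -> R) a b : (forall w, g w = a * X w + b) ->
  (fun w => U (g w)) \in Lfun P 1.
Proof.
move=> hg.
have -> : (fun w => U (g w)) = (fun w => U (a * X w + b)).
  by apply: funext => w; rewrite hg.
apply: (@lfun_bdd _ (`|U (b - `|a|)| + `|U (b + `|a|)|)).
- apply: measurableT_comp; first exact: measurable_realfun.continuous_measurable_fun cU.
  apply: measurable_realfun.measurable_funD; last exact: measurable_cst.
  apply: measurable_realfun.measurable_funM; first exact: measurable_cst.
  exact: mX.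
- move=> w; have /andP[h0 h1] := hX w.
  have [l1 l2] : b - `|a| <= a * X w + b /\ a * X w + b <= b + `|a|.
    have [a0|a0] := leP 0 a.
      rewrite ger0_norm //; split; nra.
    rewrite ltr0_norm //; split; nra.
  apply: absb; exact: hU.
Qed.


Variables (p v : R).
Hypotheses (EX : ('E_P[X] = p%:E)%E) (p0 : 0 < p) (v0 : 0 < v).

Definition Af r := fun w => U (v * X w - r).
Definition Bf r := fun w => U (v * X w - r * X w / p).

Lemma lA r : Af r \in Lfun P 1.
Proof. by apply: (@lU (fun w => v * X w - r) v (- r)) => w; ring. Qed.

Lemma lB r : Bf r \in Lfun P 1.
Proof. by apply: (@lU (fun w => v * X w - r * X w / p) (v - r / p) 0) => w; ring. Qed.

Section Concave.
Hypothesis cv : concave_fun U.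

Lemma dmono x y : x <= y -> derive1 U y <= derive1 U x.
Proof.
move=> xy; have t1 := @tangent R U x y cv (dU x); have t2 := @tangent R U y x cv (dU y).
rewrite le_eqVlt in xy; case/orP: xy => [/eqP -> //|xy].
have : 0 <= (derive1 U x - derive1 U y) * (y - x) by lra.
rewrite pmulr_lge0 ?subr_gt0 //; lra.
Qed.

Lemma c2 r : 0 <= r -> r < v * p -> ('E_P[Af r] <= 'E_P[Bf r])%E.
Proof.
move=> r0 rvp.
set k := v - r / p.
have k0 : 0 < k by rewrite /k subr_gt0 ltr_pdivrMr.
apply: (@Ele p _ _ ((r / p) * derive1 U (k * p)) EX (lA r) (lB r)) => w.
rewrite /Af /Bf.
have e1 : v * X w - r * X w / p = k * X w by rewrite /k; ring.
have e2 : v * X w - r - k * X w = r / p * (X w - p).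
  rewrite /k; field; exact: lt0r_neq0.
have := @tangent R U (k * X w) (v * X w - r) cv (dU (k * X w)); rewrite e1 e2 => t.
apply: (le_trans t); rewrite lerD2l.
have rp : 0 <= r / p by rewrite divr_ge0 // ltW.
have [xp|xp] := leP (X w) p.
  have : derive1 U (k * p) <= derive1 U (k * X w) by apply: dmono; rewrite ler_pM2l.
  move=> D; have : 0 <= (derive1 U (k * X w) - derive1 U (k * p)) * (r / p) by apply: mulr_ge0; lra.
  nra.
have : derive1 U (k * X w) <= derive1 U (k * p) by apply: dmono; rewrite ler_pM2l // ltW.
move=> D; have : 0 <= (derive1 U (k * p) - derive1 U (k * X w)) * (r / p) by apply: mulr_ge0; lra.
nra.
Qed.


Lemma c1 r : r < v * p -> (0 <= 'E_P[Bf r])%E.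
Proof.
move=> rvp; apply: expectation_ge0 => w; rewrite /Bf -U0; apply: hU.
have /andP[h0 _] := hX w.
have -> : v * X w - r * X w / p = (v - r / p) * X w by ring.
apply: mulr_ge0 => //; rewrite subr_ge0 ler_pdivrMr //; exact: ltW.
Qed.

Lemma c3 r : v * p <= r -> ('E_P[Af r] <= 0)%E.
Proof.
move=> rvp.
have lc : (cst (U (v * p - r)) : T -> R) \in Lfun P 1 by exact: Lfun_cst.
apply: (le_trans (@Ele p _ _ (v * derive1 U (v * p - r)) EX (lA r) lc _)).
  move=> w; rewrite /Af /=.
  have := @tangent R U (v * p - r) (v * X w - r) cv (dU _).
  have -> : v * X w - r - (v * p - r) = v * (X w - p) by ring.
  by rewrite mulrA [_ * v]mulrC.
rewrite expectation_cst lee_fin -U0; apply: hU; lra.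
Qed.

Lemma c4 r : v * p <= r -> ('E_P[Bf r] <= 0)%E.
Proof.
move=> rvp.
have lc : (cst 0 : T -> R) \in Lfun P 1 by exact: Lfun_cst.
apply: (le_trans (@Ele p _ _ 0 EX (lB r) lc _)).
  move=> w; rewrite /Bf /= mul0r addr0 -U0; apply: hU.
  have /andP[h0 _] := hX w.
  have -> : v * X w - r * X w / p = (v - r / p) * X w by ring.
  apply: mulr_le0_ge0 => //; rewrite subr_le0 ler_pdivlMr //.
by rewrite expectation_cst.
Qed.

Lemma dom_concave : dominant P X v U 0 v.
Proof.
move=> r r0 m' c' m0 c0; rewrite /objective EX /=.
have vp0 : 0 < v * p by apply: mulr_gt0.
rewrite (max_r (ltW vp0)) [v * p < 0]ltNge (ltW vp0) /=.
have [hr|hr] := ltP r (v * p).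
  case: ifP => _; last exact: c1.
  case: ifP => _; last exact: lexx.
  exact: c2.
case: ifP => _ //.
case: ifP => _; [exact: c3 | exact: c4].
Qed.

End Concave.

Section Convex.
Hypothesis cx : convex_fun U.

Lemma dmono' x y : x <= y -> derive1 U x <= derive1 U y.
Proof.
move=> xy; have t1 := @tangent_cvx R U x y cx (dU x).
have t2 := @tangent_cvx R U y x cx (dU y).
rewrite le_eqVlt in xy; case/orP: xy => [/eqP -> //|xy].
have : 0 <= (derive1 U y - derive1 U x) * (y - x) by lra.
rewrite pmulr_lge0 ?subr_gt0 //; lra.
Qed.

Lemma x1 r : 0 <= r -> r <= v * p -> ('E_P[Bf r] <= 'E_P[Af r])%E.
Proof.
move=> r0 rvp.
set k := v - r / p.
have k0 : 0 <= k by rewrite /k subr_ge0 ler_pdivrMr.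
apply: (@Ele p _ _ (- (r / p) * derive1 U (k * p)) EX (lB r) (lA r)) => w.
rewrite /Af /Bf.
have e1 : v * X w - r * X w / p = k * X w by rewrite /k; ring.
have e2 : v * X w - r - k * X w = r / p * (X w - p).
  rewrite /k; field; exact: lt0r_neq0.
have := @tangent_cvx R U (k * X w) (v * X w - r) cx (dU (k * X w)); rewrite e1 e2 => t.
have rp : 0 <= r / p by rewrite divr_ge0 // ltW.
have [xp|xp] := leP (X w) p.
  have : derive1 U (k * X w) <= derive1 U (k * p) by apply: dmono'; rewrite ler_wpM2l.
  move=> D; have : 0 <= (derive1 U (k * p) - derive1 U (k * X w)) * (r / p) by apply: mulr_ge0; lra.
  nra.
have : derive1 U (k * p) <= derive1 U (k * X w) by apply: dmono'; rewrite ler_wpM2l // ltW.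
move=> D; have : 0 <= (derive1 U (k * X w) - derive1 U (k * p)) * (r / p) by apply: mulr_ge0; lra.
nra.
Qed.

Lemma x2 r : v * p <= r -> ('E_P[Bf r] <= 0)%E.
Proof.
move=> rvp.
have lc : (cst 0 : T -> R) \in Lfun P 1 by exact: Lfun_cst.
apply: (le_trans (@Ele p _ _ 0 EX (lB r) lc _)).
  move=> w; rewrite /Bf /= mul0r addr0 -U0; apply: hU.
  have /andP[h0 _] := hX w.
  have -> : v * X w - r * X w / p = (v - r / p) * X w by ring.
  apply: mulr_le0_ge0 => //; rewrite subr_le0 ler_pdivlMr //.
by rewrite expectation_cst.
Qed.

Lemma x3 r : v <= r -> ('E_P[Af r] <= 0)%E.
Proof.
move=> rv.
have lc : (cst 0 : T -> R) \in Lfun P 1 by exact: Lfun_cst.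
apply: (le_trans (@Ele p _ _ 0 EX (lA r) lc _)).
  move=> w; rewrite /Af /= mul0r addr0 -U0; apply: hU.
  have /andP[_ h1] := hX w; have : v * X w <= v by apply: ler_piMr => //; exact: ltW.
  lra.
by rewrite expectation_cst.
Qed.

Lemma x4 r r' : r <= r' -> ('E_P[Af r'] <= 'E_P[Af r])%E.
Proof.
move=> rr.
apply: (@Ele p _ _ 0 EX (lA r') (lA r)) => w.
rewrite /Af mul0r addr0; apply: hU; lra.
Qed.

Lemma x5 : (0 <= 'E_P[Af 0])%E.
Proof.
apply: expectation_ge0 => w; rewrite /Af subr0 -U0; apply: hU.
have /andP[h0 _] := hX w; exact: mulr_ge0 (ltW v0) h0.
Qed.

Lemma x6 r e : 0 <= e ->
  ('E_P[Af r] <= 'E_P[Af (r + e)] + (derive1 U (v - r) * e)%:E)%E.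
Proof.
move=> e0.
have lc : (cst (derive1 U (v - r) * e) : T -> R) \in Lfun P 1 by exact: Lfun_cst.
rewrite -(expectation_cst P (derive1 U (v - r) * e)) -expectationD; [|exact: lA|exact: lc].
have lG : (Af (r + e) \+ cst (derive1 U (v - r) * e)) \in Lfun P 1.
  by apply: rpredD; [exact: lA | exact: lc].
apply: (@Ele p _ _ 0 EX (lA r) lG) => w.
rewrite /Af /= mul0r addr0.
have := @tangent_cvx R U (v * X w - r) (v * X w - (r + e)) cx (dU _).
have -> : v * X w - (r + e) - (v * X w - r) = - e by ring.
have : derive1 U (v * X w - r) <= derive1 U (v - r).
  apply: dmono'; have /andP[_ h1] := hX w; have : v * X w <= v by apply: ler_piMr => //; exact: ltW.
  lra.
move=> D t; nra.
Qed.


Definition a r := fine ('E_P[Af r])%E.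
Lemma EA r : ('E_P[Af r] = (a r)%:E)%E.
Proof. by rewrite /a fineK // expectation_fin_num // lA. Qed.

Lemma dom_convex : exists m, 0 <= m /\ dominant P X v U m 0.
Proof.
pose S := [set r | 0 <= r <= v /\ 0 <= a r].
have S0 : S 0.
  split; first by rewrite lexx ltW.
  by have := x5; rewrite EA lee_fin.
have hS : has_sup S.
  split; first by exists 0.
  by exists v => r [/andP[_ ?] _].
pose m := sup S.
have m0 : 0 <= m := sup_upper_bound hS S0.
have K1 : forall r, r < m -> 0 <= a r.
  move=> r rm.
  have mr0 : 0 < m - r by rewrite subr_gt0.
  have [e [_ ae] he] := sup_adherent mr0 hS.
  have re : r <= e by rewrite -/m in he; lra.
  apply: (le_trans ae); rewrite -lee_fin -!EA; exact: x4.
have K2 : forall r, m <= r -> a r <= 0.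
  move=> r mr; rewrite leNgt; apply/negP => ar.
  have [vr|rv] := leP v r.
    by have := x3 _ vr; rewrite EA lee_fin; lra.
  pose c := `|derive1 U (v - r)| + 1.
  have c0 : 0 < c by rewrite /c ltr_pwDr.
  pose e := Num.min (v - r) (a r / (2 * c)).
  have e0 : 0 < e.
    by rewrite /e lt_min subr_gt0 rv /= divr_gt0 // mulr_gt0.
  have e1 : e <= v - r by rewrite /e ge_min lexx.
  have e2 : e <= a r / (2 * c) by rewrite /e ge_min lexx orbT.
  have h6 := x6 r e (ltW e0); rewrite !EA -EFinD lee_fin in h6.
  have h7 : derive1 U (v - r) * e <= c * e.
    apply: ler_wpM2r; first exact: ltW.
    by rewrite /c; have := ler_norm (derive1 U (v - r)); lra.
  have h8 : c * e <= a r / 2.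
    have -> : a r / 2 = c * (a r / (2 * c)) by field; rewrite gt_eqF.
    by apply: ler_wpM2l => //; exact: ltW.
  have Se : S (r + e).
    split; last lra.
    apply/andP; split; lra.
  have := sup_upper_bound hS Se; rewrite -/m; lra.
exists m; split => //.
move=> r r0 m' c' hm' hc'; rewrite /objective EX /= mul0r (max_l m0).
have EAr : ('E_P[fun w => U (v * X w - r)] = (a r)%:E)%E := EA r.
have [rm|mr] := ltP r m.
  rewrite (le_lt_trans r0 rm) /= EAr.
  case: ifP => _; last by rewrite lee_fin; exact: K1.
  case: ifP => _; first exact: lexx.
  have [rvp|vpr] := leP r (v * p).
    by rewrite -EAr; exact: x1.
  apply: (le_trans (x2 _ (ltW vpr))); rewrite lee_fin; exact: K1.
case: ifP => _ //.
case: ifP => _; first by rewrite EAr lee_fin; exact: K2.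
have [rvp|vpr] := leP r (v * p).
  apply: (le_trans (x1 _ r0 rvp)); rewrite EA lee_fin; exact: K2.
exact: x2 _ (ltW vpr).
Qed.

End Convex.
End S2.
End S.

Theorem lemma2 (d : measure_display) (T : measurableType d) (R : realType)
  (P : probability T R) (X : {RV P >-> R}) (v : R) (U : R -> R) :
  0 < v ->
  (forall w, 0 <= X w <= 1) ->
  (0 < fine 'E_P[X])%R ->
  {homo U : x y / x <= y} ->
  (forall x, derivable U x 1) ->
  ({homo derive1 U : x y / x <= y} \/ {homo derive1 U : x y / y <= x}) ->
  U 0 = 0 ->
  (concave_fun U -> dominant P X v U 0 v) /\
  (convex_fun U -> exists m : R, 0 <= m /\ dominant P X v U m 0).
Proof.
move=> v0 hX p0 hU dU _ U0.
have EX : ('E_P[X] = (fine 'E_P[X])%:E)%E.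
  by rewrite fineK // expectation_fin_num // (@lX d T R P X hX).
split.
- move=> cv; exact: (@dom_concave d T R P X hX U hU dU U0 _ v EX p0 v0 cv).
- move=> cx; exact: (@dom_convex d T R P X hX U hU dU U0 _ v EX p0 v0 cx).
Qed.
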